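(* For $k\ge1$ let $\Delta^k=\{\mathbf{x}\in\mathbb{R}^k:x_i\ge0,\ \sum_i x_i\le1\}$ and define $g:\Delta^k\to\mathbb{R}$ by $$g(\mathbf{x})=-\sum_i x_i\ln x_i+\sum_i(1-x_i)\ln(1-x_i)-2\Big(1-\sum_i x_i\Big)\ln\Big(1-\sum_i x_i\Big)$$ (with $0\ln 0=0$). Then $g$ is concave on $\Delta^k$, and in the interior of $\Delta^k$, $$\frac{\partial g}{\partial x_i}=\ln\left(\frac{(1-\sum_j x_j)^2}{x_i(1-x_i)}\right).$$ *)

(* Defs.v *)
(* classical reals. Vectors in R^k are functions nat -> R,
   only the coordinates 0..k-1 are used. *)
From Stdlib Require Import Reals.
Open Scope R_scope.

Fixpoint rsum (k : nat) (f : nat -> R) : R :=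
  match k with
  | O => 0
  | S n => rsum n f + f n
  end.

Definition xlnx (t : R) : R := if Req_EM_T t 0 then 0 else t * ln t.

Definition in_simplex (k : nat) (x : nat -> R) : Prop :=
  (forall i, (i < k)%nat -> 0 <= x i) /\ rsum k x <= 1.

Definition in_simplex_interior (k : nat) (x : nat -> R) : Prop :=
  (forall i, (i < k)%nat -> 0 < x i) /\ rsum k x < 1.

Definition g (k : nat) (x : nat -> R) : R :=
  - rsum k (fun i => xlnx (x i))
  + rsum k (fun i => xlnx (1 - x i))
  - 2 * xlnx (1 - rsum k x).

Definition upd (x : nat -> R) (i : nat) (s : R) : nat -> R :=
  fun j => if Nat.eqb j i then s else x j.

(* Main.v *)
Require Import Defs.
From Stdlib Require Import Reals Lra Lia.
From Coquelicot Require Import Coquelicot.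
Open Scope R_scope.

Lemma rsum_ext k f h : (forall i, (i < k)%nat -> f i = h i) -> rsum k f = rsum k h.
Proof.
  induction k; simpl; intros H; [reflexivity|].
  rewrite IHk by (intros; apply H; lia). rewrite H by lia. reflexivity.
Qed.

Lemma rsum_plus k f h : rsum k (fun i => f i + h i) = rsum k f + rsum k h.
Proof. induction k; simpl; [ring|]. rewrite IHk; ring. Qed.

Lemma rsum_scal k c f : rsum k (fun i => c * f i) = c * rsum k f.
Proof. induction k; simpl; [ring|]. rewrite IHk; ring. Qed.

Lemma rsum_opp k f : rsum k (fun i => - f i) = - rsum k f.
Proof. induction k; simpl; [ring|]. rewrite IHk; ring. Qed.

Lemma rsum_affine k p q t : rsum k (fun j => p j + q j * t) = rsum k p + rsum k q * t.
Proof. induction k; simpl; [ring|]. rewrite IHk; ring. Qed.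

Lemma rsum_nonneg k f : (forall i, (i < k)%nat -> 0 <= f i) -> 0 <= rsum k f.
Proof.
  induction k; simpl; intros H; [lra|].
  assert (0 <= rsum k f) by (apply IHk; intros; apply H; lia).
  assert (0 <= f k) by (apply H; lia). lra.
Qed.

Lemma rsum_le k f h : (forall i, (i < k)%nat -> f i <= h i) -> rsum k f <= rsum k h.
Proof.
  induction k; simpl; intros H; [lra|].
  assert (rsum k f <= rsum k h) by (apply IHk; intros; apply H; lia).
  assert (f k <= h k) by (apply H; lia). lra.
Qed.

Lemma rsum_term k f i : (forall j, (j < k)%nat -> 0 <= f j) -> (i < k)%nat -> f i <= rsum k f.
Proof.
  induction k; simpl; intros H Hi; [lia|].
  assert (0 <= rsum k f) by (apply rsum_nonneg; intros; apply H; lia).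
  destruct (Nat.eq_dec i k).
  - subst. lra.
  - assert (f i <= rsum k f) by (apply IHk; [intros; apply H; lia| lia]).
    assert (0 <= f k) by (apply H; lia). lra.
Qed.

Lemma rsum_ind k m c : (m < k)%nat -> rsum k (fun j => if Nat.eqb j m then c else 0) = c.
Proof.
  induction k; simpl; intros Hm; [lia|].
  destruct (Nat.eq_dec m k).
  - subst. rewrite Nat.eqb_refl.
    rewrite (rsum_ext _ _ (fun _ => 0)).
    + assert (Z: forall n, rsum n (fun _ => 0) = 0) by (induction n; simpl; [ring|rewrite IHn; ring]).
      rewrite Z; ring.
    + intros i Hi. destruct (Nat.eqb_spec i k); [lia|reflexivity].
  - rewrite IHk by lia. destruct (Nat.eqb_spec k m); [lia|ring].
Qed.

Lemma rsum_zero k a r : (forall i, (i < k)%nat -> 0 <= a i) ->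
  (forall i, (i < k)%nat -> a i = 0 -> r i = 0) -> rsum k a = 0 -> rsum k r = 0.
Proof.
  induction k; simpl; intros H0 H1 H2; [reflexivity|].
  assert (0 <= rsum k a) by (apply rsum_nonneg; intros; apply H0; lia).
  assert (0 <= a k) by (apply H0; lia).
  rewrite IHk; [|intros; apply H0; lia|intros; apply H1; auto; lia|lra].
  rewrite H1; [ring|lia|lra].
Qed.

Definition ff (a : R) : R := a * (1 - a) / (1 - 2 * a).

Lemma div_nonneg a b : 0 <= a -> 0 <= b -> 0 <= a / b.
Proof.
  intros Ha Hb. destruct (Req_dec b 0) as [->|Hb'].
  - unfold Rdiv. rewrite Rinv_0. lra.
  - apply Rmult_le_pos; auto. left. apply Rinv_0_lt_compat. lra.
Qed.

Lemma zero_sq_div b : 0 ^ 2 / b = 0.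
Proof. unfold Rdiv. simpl. ring. Qed.

Lemma ff_pos a : 0 < a < 1/2 -> 0 < ff a.
Proof.
  intros H. unfold ff. apply Rdiv_lt_0_compat; nra.
Qed.

Lemma ff_super a b : 0 <= a -> 0 <= b -> a + b < 1/2 -> ff a + ff b <= ff (a + b).
Proof.
  intros Ha Hb Hab.
  assert (E : ff (a + b) - ff a - ff b =
     2 * a * b * (1 - a - b) / ((1 - 2*a - 2*b) * (1 - 2*a) * (1 - 2*b))).
  { unfold ff. field. repeat split; lra. }
  assert (0 <= 2 * a * b * (1 - a - b) / ((1 - 2*a - 2*b) * (1 - 2*a) * (1 - 2*b))).
  { apply div_nonneg.
    - apply Rmult_le_pos; [|lra]. apply Rmult_le_pos; lra.
    - apply Rmult_le_pos; [apply Rmult_le_pos|]; lra. }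
  lra.
Qed.

Lemma cs2 r s F G : 0 < F -> 0 < G -> (r + s) ^ 2 / (F + G) <= r ^ 2 / F + s ^ 2 / G.
Proof.
  intros HF HG.
  assert (E : r ^ 2 / F + s ^ 2 / G - (r + s) ^ 2 / (F + G) = (r * G - s * F) ^ 2 / (F * G * (F + G))).
  { field. repeat split; lra. }
  assert (0 <= (r * G - s * F) ^ 2 / (F * G * (F + G))).
  { apply div_nonneg. apply pow2_ge_0. apply Rmult_le_pos; [apply Rmult_le_pos|]; lra. }
  lra.
Qed.

Lemma bin a b r s : 0 <= a -> 0 <= b -> a + b < 1/2 -> (a = 0 -> r = 0) -> (b = 0 -> s = 0) ->
  (r + s) ^ 2 / ff (a + b) <= r ^ 2 / ff a + s ^ 2 / ff b.
Proof.
  intros Ha Hb Hab Hr Hs.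
  destruct (Req_dec a 0) as [Ea|Ea].
  { rewrite Hr by auto. subst a. replace (0 + b) with b by ring. replace (0 + s) with s by ring.
    rewrite zero_sq_div. lra. }
  destruct (Req_dec b 0) as [Eb|Eb].
  { rewrite Hs by auto. subst b. replace (a + 0) with a by ring. replace (r + 0) with r by ring.
    rewrite zero_sq_div. lra. }
  assert (Fa : 0 < ff a) by (apply ff_pos; lra).
  assert (Fb : 0 < ff b) by (apply ff_pos; lra).
  assert (Fs := ff_super a b Ha Hb Hab).
  eapply Rle_trans; [|apply cs2; auto].
  unfold Rdiv. apply Rmult_le_compat_l. apply pow2_ge_0.
  apply Rinv_le_contravar; lra.
Qed.

Lemma LL k a r : (forall i, (i < k)%nat -> 0 <= a i) ->
  (forall i, (i < k)%nat -> a i = 0 -> r i = 0) -> rsum k a < 1/2 ->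
  (rsum k r) ^ 2 / ff (rsum k a) <= rsum k (fun i => r i ^ 2 / ff (a i)).
Proof.
  induction k; simpl; intros H0 H1 H2.
  - rewrite zero_sq_div. lra.
  - assert (0 <= rsum k a) by (apply rsum_nonneg; intros; apply H0; lia).
    assert (0 <= a k) by (apply H0; lia).
    eapply Rle_trans; [apply bin; [lra|lra|lra| |]|].
    + intros Z. apply (rsum_zero k a r); [intros; apply H0; lia|intros; apply H1; auto; lia|exact Z].
    + intros; apply H1; auto; lia.
    + apply Rplus_le_compat_r. apply IHk; [intros; apply H0; lia|intros; apply H1; auto; lia|lra].
Qed.

Lemma split_half k (z : nat -> R) :
  (exists m, (m < k)%nat /\ 1/2 < z m) \/ (forall i, (i < k)%nat -> z i <= 1/2).
Proof.
  induction k.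
  - right; intros; lia.
  - destruct IHk as [[m [Hm Hz]]|H].
    + left; exists m; split; [lia|auto].
    + destruct (Rle_lt_dec (z k) (1/2)).
      * right; intros i Hi. destruct (Nat.eq_dec i k); [subst; auto|apply H; lia].
      * left; exists k; split; [lia|auto].
Qed.

Lemma rsum_skip k m F : (m < k)%nat ->
  rsum k (fun j => if Nat.eqb j m then 0 else F j) = rsum k F - F m.
Proof.
  intros Hm.
  assert (E: forall j, (j < k)%nat -> (if Nat.eqb j m then 0 else F j) = F j - (if Nat.eqb j m then F m else 0)).
  { intros j _. destruct (Nat.eqb_spec j m); [subst; ring|ring]. }
  rewrite (rsum_ext _ _ _ E).
  rewrite (rsum_ext _ _ (fun j => F j + - (if Nat.eqb j m then F m else 0))) by (intros; ring).
  rewrite rsum_plus, rsum_opp, rsum_ind by auto. ring.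
Qed.

Lemma QF k z q :
 (forall i, (i<k)%nat -> 0 <= z i) ->
 (forall i, (i<k)%nat -> z i = 0 -> q i = 0) ->
 (forall i, (i<k)%nat -> 1 - z i = 0 -> q i = 0) ->
 0 <= 1 - rsum k z ->
 (1 - rsum k z = 0 -> rsum k q = 0) ->
 rsum k (fun i => q i ^ 2 / (1 - z i)) <=
   rsum k (fun i => q i ^ 2 / z i) + 2 * (rsum k q) ^ 2 / (1 - rsum k z).
Proof.
  intros Hz Hz0 Hz1 HS HS0.
  assert (Hle1 : forall i, (i < k)%nat -> z i <= 1).
  { intros i Hi. assert (z i <= rsum k z) by (apply rsum_term; auto). lra. }
  destruct (split_half k z) as [[m [Hm Hzm]]|Hsmall].
  -
    set (S := 1 - rsum k z).
    set (W := rsum k q).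
    set (u := 1 - z m).
    set (a := fun j => if Nat.eqb j m then 0 else z j).
    set (r := fun j => if Nat.eqb j m then 0 else q j).
    assert (Ea : rsum k a = rsum k z - z m) by (apply rsum_skip; auto).
    assert (Er : rsum k r = rsum k q - q m) by (apply rsum_skip; auto).
    assert (Ha : forall i, (i < k)%nat -> 0 <= a i).
    { intros i Hi. unfold a. destruct (Nat.eqb i m); [lra|auto]. }
    assert (Hzm1 : z m <= 1) by auto.
    assert (HA : rsum k a < 1/2) by (rewrite Ea; unfold S, u in *; lra).
    assert (Har : forall i, (i < k)%nat -> a i = 0 -> r i = 0).
    { intros i Hi. unfold a, r. destruct (Nat.eqb i m); [auto|apply Hz0; auto]. }
    assert (HLL := LL k a r Ha Har HA).
    assert (HA0 : 0 <= rsum k a) by (apply rsum_nonneg; auto).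
    assert (Hbin : (rsum k r + - W) ^ 2 / ff (rsum k a + S) <=
                   (rsum k r) ^ 2 / ff (rsum k a) + (- W) ^ 2 / ff S).
    { apply bin; auto.
      - unfold S, u in *; lra.
      - intros Z. apply (rsum_zero k a r); auto.
      - intros Z. unfold W. rewrite HS0 by auto. ring. }
    replace (rsum k r + - W) with (- q m) in Hbin by (unfold W; lra).
    replace (rsum k a + S) with u in Hbin by (unfold S, u; lra).
    assert (Hpt : forall i, (i < k)%nat -> q i ^ 2 / (1 - z i) =
       q i ^ 2 / z i + ((if Nat.eqb i m then q m ^ 2 / ff u else 0) + - (r i ^ 2 / ff (a i)))).
    { intros i Hi. unfold r, a. destruct (Nat.eqb_spec i m).
      - subst i. rewrite zero_sq_div.
        destruct (Req_dec (z m) 1) as [E|E].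
        + rewrite (Hz1 m Hm) by lra. rewrite !zero_sq_div. ring.
        + unfold ff, u. field. repeat split; lra.
      - assert (z i <= rsum k a).
        { replace (z i) with (a i) by (unfold a; destruct (Nat.eqb_spec i m); [lia|auto]).
          apply rsum_term; auto. }
        destruct (Req_dec (z i) 0) as [E|E].
        + rewrite (Hz0 i Hi E). rewrite !zero_sq_div. ring.
        + assert (0 < z i) by (specialize (Hz i Hi); lra).
          unfold ff. field. repeat split; lra. }
    rewrite (rsum_ext _ _ _ Hpt), !rsum_plus, rsum_opp, rsum_ind by auto.
    fold W S.
    assert (HW : (- W) ^ 2 / ff S <= 2 * W ^ 2 / S).
    { destruct (Req_dec S 0) as [E|E].
      - assert (W = 0) by (unfold W; apply HS0; auto). rewrite H. unfold Rdiv. rewrite E, Rinv_0. simpl. lra.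
      - assert (0 < S) by (unfold S in *; lra).
        assert (S < 1/2) by (unfold S, u in *; lra).
        replace ((- W) ^ 2 / ff S) with (W ^ 2 / S * ((1 - 2 * S) / (1 - S)))
          by (unfold ff; field; repeat split; lra).
        replace (2 * W ^ 2 / S) with (W ^ 2 / S * 2) by (field; lra).
        apply Rmult_le_compat_l. apply div_nonneg; [apply pow2_ge_0|lra].
        apply (Rmult_le_reg_r (1 - S)); [lra|].
        unfold Rdiv. rewrite Rmult_assoc, Rinv_l by lra. lra. }
    replace ((- q m) ^ 2) with (q m ^ 2) in Hbin by ring.
    lra.
  -
    assert (rsum k (fun i => q i ^ 2 / (1 - z i)) <= rsum k (fun i => q i ^ 2 / z i)).
    { apply rsum_le. intros i Hi.
      destruct (Req_dec (z i) 0) as [E|E].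
      - rewrite (Hz0 i Hi E). rewrite !zero_sq_div. lra.
      - assert (0 < z i) by (specialize (Hz i Hi); lra).
        assert (z i <= 1/2) by auto.
        unfold Rdiv. apply Rmult_le_compat_l. apply pow2_ge_0.
        apply Rinv_le_contravar; lra. }
    assert (0 <= 2 * rsum k q ^ 2 / (1 - rsum k z)).
    { apply div_nonneg; auto. apply Rmult_le_pos; [lra|apply pow2_ge_0]. }
    lra.
Qed.

Lemma xlnx_pos v : 0 < v -> xlnx v = v * ln v.
Proof. intros H. unfold xlnx. destruct (Req_EM_T v 0); [exfalso; lra|reflexivity]. Qed.

Lemma ln_nonpos v : v <= 0 -> ln v = 0.
Proof. intros H. unfold ln. destruct (Rlt_dec 0 v); [exfalso; lra|reflexivity]. Qed.

Lemma xlnx_nonpos v : v <= 0 -> xlnx v = 0.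
Proof. intros H. unfold xlnx. destruct (Req_EM_T v 0); [reflexivity|]. rewrite ln_nonpos; auto; ring. Qed.

Lemma locally_pos v : 0 < v -> locally v (fun s => 0 < s).
Proof.
  intros Hv. exists (mkposreal v Hv). intros s Hs.
  unfold ball in Hs; simpl in Hs. unfold AbsRing_ball, abs, minus, plus, opp in Hs; simpl in Hs.
  apply Rabs_def2 in Hs. lra.
Qed.

Lemma D_xlnx v : 0 < v -> is_derive xlnx v (ln v + 1).
Proof.
  intros Hv.
  apply (is_derive_ext_loc (fun s => s * ln s)).
  - eapply filter_imp; [|apply locally_pos; exact Hv].
    intros s Hs. simpl. rewrite xlnx_pos; auto.
  - auto_derive; [auto|]. field. lra.
Qed.

Lemma ln_le_sub1 u : 0 < u -> ln u <= u - 1.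
Proof. intros H. assert (E := exp_ineq1_le (ln u)). rewrite exp_ln in E; auto. lra. Qed.

Lemma xlnx_small v : 0 < v < 1 -> Rabs (xlnx v) <= 2 * sqrt v.
Proof.
  intros Hv. rewrite xlnx_pos by lra.
  set (s := sqrt v).
  assert (Hs : 0 < s) by (apply sqrt_lt_R0; lra).
  assert (Hss : s * s = v) by (apply sqrt_sqrt; lra).
  assert (Hs1 : s < 1) by nra.
  assert (Hl : ln v = 2 * ln s).
  { rewrite <- Hss, ln_mult by auto. ring. }
  assert (Hb : - ln s <= / s - 1).
  { rewrite <- ln_Rinv by auto. apply ln_le_sub1. apply Rinv_0_lt_compat; auto. }
  assert (Hn : ln s < 0).
  { rewrite <- ln_1. apply ln_increasing; lra. }
  rewrite Hl, <- Hss.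
  rewrite Rabs_left by nra.
  assert (E : s * s * (/ s - 1) = s - s * s) by (field; lra).
  nra.
Qed.

Lemma locally_neg v : v < 0 -> locally v (fun s => s < 0).
Proof.
  intros Hv. assert (H : 0 < - v) by lra. exists (mkposreal (- v) H). intros s Hs.
  unfold ball in Hs; simpl in Hs. unfold AbsRing_ball, abs, minus, plus, opp in Hs; simpl in Hs.
  apply Rabs_def2 in Hs. lra.
Qed.

Lemma cont_xlnx v : continuity_pt xlnx v.
Proof.
  destruct (Rtotal_order v 0) as [Hv|[Hv|Hv]].
  - apply continuity_pt_locally. intros eps.
    eapply filter_imp; [|apply locally_neg; exact Hv].
    intros s Hs. rewrite !xlnx_nonpos by lra. rewrite Rminus_0_r, Rabs_R0. apply cond_pos.
  - subst v. apply continuity_pt_locally. intros eps.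
    assert (Hd : 0 < Rmin 1 (eps/2*(eps/2))).
    { apply Rmin_pos; [lra|]. assert (0 < eps) by apply cond_pos. nra. }
    exists (mkposreal _ Hd). intros s Hs.
    unfold ball in Hs; simpl in Hs. unfold AbsRing_ball, abs, minus, plus, opp in Hs; simpl in Hs.
    rewrite Ropp_0, Rplus_0_r in Hs.
    assert (H1 := Rmin_l 1 (eps/2*(eps/2))). assert (H2 := Rmin_r 1 (eps/2*(eps/2))).
    rewrite (xlnx_nonpos 0) by lra. rewrite Rminus_0_r.
    destruct (Rle_dec s 0).
    + rewrite xlnx_nonpos, Rabs_R0 by auto. apply cond_pos.
    + apply Rabs_def2 in Hs. apply Rnot_le_gt in n.
      assert (Hb := xlnx_small s ltac:(lra)).
      assert (Hss : sqrt s * sqrt s = s) by (apply sqrt_sqrt; lra).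
      assert (0 <= sqrt s) by apply sqrt_pos.
      assert (0 < eps) by apply cond_pos.
      assert (sqrt s < eps / 2) by nra.
      lra.
  - apply derivable_continuous_pt. exists (ln v + 1). apply is_derive_Reals, D_xlnx; auto.
Qed.

Lemma dplus f h x a b : is_derive f x a -> is_derive h x b -> is_derive (fun t => f t + h t) x (a + b).
Proof. intros. apply (is_derive_plus f h); auto. Qed.

Lemma dopp f x a : is_derive f x a -> is_derive (fun t => - f t) x (- a).
Proof. intros. apply (is_derive_opp f); auto. Qed.

Lemma dscal c f x a : is_derive f x a -> is_derive (fun t => c * f t) x (c * a).
Proof. intros. apply (is_derive_scal f); auto. Qed.

Lemma dconst c x : is_derive (fun _ => c) x 0.
Proof. apply (is_derive_const c). Qed.

Definition OK (p q s : R) := 0 < p + q * s \/ (p = 0 /\ q = 0).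

Lemma D_atom p q t : OK p q t -> is_derive (fun s => xlnx (p + q * s)) t (q * (ln (p + q * t) + 1)).
Proof.
  intros [H|[-> ->]].
  - eapply is_derive_ext; [intros; reflexivity|].
    apply (is_derive_comp xlnx (fun s => p + q * s)).
    + apply D_xlnx; auto.
    + auto_derive; auto. ring.
  - apply (is_derive_ext (fun _ => 0)).
    + intros s. replace (0 + 0 * s) with 0 by ring. rewrite xlnx_nonpos; lra.
    + replace (0 * (ln (0 + 0 * t) + 1)) with 0 by ring. apply dconst.
Qed.

Lemma D_atom2 p q t : OK p q t -> is_derive (fun s => q * (ln (p + q * s) + 1)) t (q ^ 2 / (p + q * t)).
Proof.
  intros [H|[-> ->]].
  - auto_derive; auto. field. lra.
  - apply (is_derive_ext (fun _ => 0)).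
    + intros s. symmetry. apply Rmult_0_l.
    + unfold Rdiv. replace (0 ^ 2 * / (0 + 0 * t)) with 0 by (simpl; ring). apply dconst.
Qed.

Lemma D_rsum k F F' t : (forall j, (j < k)%nat -> is_derive (F j) t (F' j)) ->
  is_derive (fun s => rsum k (fun j => F j s)) t (rsum k F').
Proof.
  induction k; simpl; intros H.
  - apply dconst.
  - apply dplus. apply IHk; intros; apply H; lia. apply H; lia.
Qed.

Lemma C_rsum k F t : (forall j, continuity_pt (F j) t) ->
  continuity_pt (fun s => rsum k (fun j => F j s)) t.
Proof.
  induction k; simpl; intros H.
  - apply continuity_pt_const. intros a b; reflexivity.
  - apply (continuity_pt_plus (fun s => rsum k (fun j => F j s)) (F k)); auto.
Qed.

Lemma C_atom p q t : continuity_pt (fun s => xlnx (p + q * s)) t.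
Proof.
  apply (continuity_pt_comp (fun s => p + q * s) xlnx); [|apply cont_xlnx].
  apply derivable_continuous_pt. exists q. apply is_derive_Reals. auto_derive; auto; ring.
Qed.

Definition Phi k p q s := g k (fun j => p j + q j * s).

Definition Phi1 k p q s :=
  - rsum k (fun j => q j * (ln (p j + q j * s) + 1))
  + rsum k (fun j => (- q j) * (ln ((1 - p j) + (- q j) * s) + 1))
  - 2 * ((- rsum k q) * (ln ((1 - rsum k p) + (- rsum k q) * s) + 1)).

Definition Phi2 k p q s :=
  - rsum k (fun j => q j ^ 2 / (p j + q j * s))
  + rsum k (fun j => (- q j) ^ 2 / ((1 - p j) + (- q j) * s))
  - 2 * ((- rsum k q) ^ 2 / ((1 - rsum k p) + (- rsum k q) * s)).

Definition AllOK k p q s :=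
  (forall j, (j < k)%nat -> OK (p j) (q j) s /\ OK (1 - p j) (- q j) s) /\
  OK (1 - rsum k p) (- rsum k q) s.

Lemma Phi_eq k p q s : Phi k p q s =
  - rsum k (fun j => xlnx (p j + q j * s))
  + rsum k (fun j => xlnx ((1 - p j) + (- q j) * s))
  - 2 * xlnx ((1 - rsum k p) + (- rsum k q) * s).
Proof.
  unfold Phi, g. f_equal; [f_equal|].
  - apply rsum_ext. intros. f_equal. ring.
  - f_equal. f_equal. rewrite rsum_affine. ring.
Qed.

Lemma D_Phi k p q s : AllOK k p q s -> is_derive (Phi k p q) s (Phi1 k p q s).
Proof.
  intros [H1 H2].
  apply (is_derive_ext (fun s => - rsum k (fun j => xlnx (p j + q j * s))
  + rsum k (fun j => xlnx ((1 - p j) + (- q j) * s))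
  + - (2 * xlnx ((1 - rsum k p) + (- rsum k q) * s)))).
  { intros. rewrite Phi_eq. reflexivity. }
  unfold Phi1. unfold Rminus at 3.
  apply dplus; [apply dplus|].
  - apply dopp. apply (D_rsum k (fun j s => xlnx (p j + q j * s))).
    intros j Hj. apply D_atom. apply H1; auto.
  - apply (D_rsum k (fun j s => xlnx ((1 - p j) + (- q j) * s))).
    intros j Hj. apply D_atom. apply H1; auto.
  - apply dopp, dscal. apply D_atom. auto.
Qed.

Lemma D_Phi1 k p q s : AllOK k p q s -> is_derive (Phi1 k p q) s (Phi2 k p q s).
Proof.
  intros [H1 H2].
  unfold Phi1, Phi2. unfold Rminus at 3 6.
  apply dplus; [apply dplus|].
  - apply dopp. apply (D_rsum k (fun j s => q j * (ln (p j + q j * s) + 1))).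
    intros j Hj. apply D_atom2. apply H1; auto.
  - apply (D_rsum k (fun j s => (- q j) * (ln ((1 - p j) + (- q j) * s) + 1))).
    intros j Hj. apply D_atom2. apply H1; auto.
  - apply dopp, dscal. apply D_atom2. auto.
Qed.

Lemma C_Phi k p q s : continuity_pt (Phi k p q) s.
Proof.
  apply (continuity_pt_ext (fun s => - rsum k (fun j => xlnx (p j + q j * s))
  + rsum k (fun j => xlnx ((1 - p j) + (- q j) * s))
  + - (2 * xlnx ((1 - rsum k p) + (- rsum k q) * s)))).
  { intros. rewrite Phi_eq. reflexivity. }
  apply continuity_pt_plus; [apply continuity_pt_plus|].
  - apply continuity_pt_opp. apply (C_rsum k (fun j s => xlnx (p j + q j * s))). intros; apply C_atom.
  - apply (C_rsum k (fun j s => xlnx ((1 - p j) + (- q j) * s))). intros; apply C_atom.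
  - apply continuity_pt_opp. apply continuity_pt_scal. apply C_atom.
Qed.

Lemma mvt f df a b : a < b -> (forall c, a < c < b -> is_derive f c (df c)) ->
  (forall c, a <= c <= b -> continuity_pt f c) ->
  exists c, a < c < b /\ f b - f a = df c * (b - a).
Proof.
  intros Hab Hd Hc.
  pose (pr1 := fun c (P : a < c < b) => exist (fun l => derivable_pt_abs f c l) (df c)
                  (proj1 (is_derive_Reals _ _ _) (Hd c P))).
  destruct (MVT f id a b pr1 (fun c _ => derivable_pt_id c) Hab Hc
              (fun c _ => derivable_continuous_pt _ _ (derivable_pt_id c))) as [c [P E]].
  exists c. split; auto.
  rewrite derive_pt_id in E. simpl in E. unfold id in E. lra.
Qed.

Lemma conc1 f f1 f2 t : 0 < t < 1 ->
  (forall c, 0 <= c <= 1 -> continuity_pt f c) ->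
  (forall c, 0 < c < 1 -> is_derive f c (f1 c)) ->
  (forall c, 0 < c < 1 -> is_derive f1 c (f2 c)) ->
  (forall c, 0 < c < 1 -> f2 c <= 0) ->
  t * f 1 + (1 - t) * f 0 <= f t.
Proof.
  intros Ht Hc Hd1 Hd2 Hneg.
  destruct (mvt f f1 0 t) as [c1 [Hc1 E1]]; [lra| intros; apply Hd1; lra | intros; apply Hc; lra |].
  destruct (mvt f f1 t 1) as [c2 [Hc2 E2]]; [lra| intros; apply Hd1; lra | intros; apply Hc; lra |].
  destruct (mvt f1 f2 c1 c2) as [c [Hc3 E3]]; [lra| intros; apply Hd2; lra | |].
  { intros c Hc'. apply derivable_continuous_pt. exists (f2 c). apply is_derive_Reals, Hd2. lra. }
  assert (f2 c <= 0) by (apply Hneg; lra).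
  assert (f1 c2 <= f1 c1) by nra.
  assert (Hp : 0 <= t * (1 - t) * (f1 c1 - f1 c2)) by (apply Rmult_le_pos; [apply Rmult_le_pos|]; lra).
  assert (Eq : t * f 1 + (1 - t) * f 0 - f t = - (t * (1 - t) * (f1 c1 - f1 c2))).
  { replace (f 1) with (f t + f1 c2 * (1 - t)) by lra.
    replace (f 0) with (f t - f1 c1 * (t - 0)) by lra. ring. }
  lra.
Qed.

Lemma g_ext k f h : (forall i, (i < k)%nat -> f i = h i) -> g k f = g k h.
Proof.
  intros H. unfold g. rewrite (rsum_ext k f h H).
  rewrite (rsum_ext k (fun i => xlnx (f i)) (fun i => xlnx (h i))) by (intros; rewrite H; auto).
  rewrite (rsum_ext k (fun i => xlnx (1 - f i)) (fun i => xlnx (1 - h i))) by (intros; rewrite H; auto).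
  reflexivity.
Qed.

Lemma OK_of p q s : 0 <= p -> 0 <= p + q -> 0 < s < 1 -> OK p q s.
Proof.
  intros H1 H2 Hs. unfold OK.
  destruct (Req_dec p 0); destruct (Req_dec (p + q) 0).
  - right; lra.
  - left; nra.
  - left; nra.
  - left; nra.
Qed.

Lemma OK_use p q s : OK p q s -> 0 <= p + q * s /\ (p + q * s = 0 -> q = 0).
Proof. intros [H|[-> ->]]; split; intros; lra. Qed.

Lemma part1 k (x y : nat -> R) (t : R) :
  in_simplex k x -> in_simplex k y -> 0 <= t <= 1 ->
  t * g k x + (1 - t) * g k y <= g k (fun j => t * x j + (1 - t) * y j).
Proof.
  intros [Hx0 Hx1] [Hy0 Hy1] Ht.
  set (q := fun j => x j - y j).
  assert (Hcomb : forall s, g k (fun j => s * x j + (1 - s) * y j) = Phi k y q s).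
  { intros s. unfold Phi. apply g_ext. intros i _. unfold q. ring. }
  assert (Ex : g k x = Phi k y q 1).
  { unfold Phi. apply g_ext. intros i _. unfold q. ring. }
  assert (Ey : g k y = Phi k y q 0).
  { unfold Phi. apply g_ext. intros i _. unfold q. ring. }
  rewrite Hcomb, Ex, Ey.
  destruct (Req_dec t 0) as [->|Ht0]; [lra|].
  destruct (Req_dec t 1) as [->|Ht1]; [lra|].
  assert (Hq : rsum k q = rsum k x - rsum k y).
  { unfold q. rewrite (rsum_ext _ _ (fun j => x j + - y j)) by (intros; ring).
    rewrite rsum_plus, rsum_opp. ring. }
  assert (Hyle : forall j, (j < k)%nat -> y j <= 1).
  { intros j Hj. assert (y j <= rsum k y) by (apply rsum_term; auto). lra. }
  assert (HOK : forall s, 0 < s < 1 -> AllOK k y q s).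
  { intros s Hs. split.
    - intros j Hj. unfold q. split.
      + apply OK_of; [apply Hy0; auto | | auto].
        replace (y j + (x j - y j)) with (x j) by ring; apply Hx0; auto.
      + apply OK_of; [assert (y j <= 1) by auto; lra | | auto].
        assert (x j <= rsum k x) by (apply rsum_term; auto); lra.
    - rewrite Hq. apply OK_of; auto; lra. }
  apply (conc1 (Phi k y q) (Phi1 k y q) (Phi2 k y q)); [lra| | | |].
  - intros; apply C_Phi.
  - intros; apply D_Phi, HOK; auto.
  - intros; apply D_Phi1, HOK; auto.
  - intros s Hs. destruct (HOK s Hs) as [H1 H2].
    set (z := fun j => y j + q j * s).
    assert (Ez : rsum k z = rsum k y + rsum k q * s) by (apply rsum_affine).
    assert (HQ := QF k z q).
    unfold Phi2.
    rewrite (rsum_ext k (fun j => q j ^ 2 / (y j + q j * s)) (fun j => q j ^ 2 / z j)) by auto.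
    rewrite (rsum_ext k (fun j => (- q j) ^ 2 / ((1 - y j) + (- q j) * s)) (fun j => q j ^ 2 / (1 - z j)))
      by (intros; unfold z; f_equal; ring).
    replace ((1 - rsum k y) + (- rsum k q) * s) with (1 - rsum k z) by lra.
    replace ((- rsum k q) ^ 2) with (rsum k q ^ 2) by ring.
    assert (E2 : 2 * (rsum k q ^ 2 / (1 - rsum k z)) = 2 * rsum k q ^ 2 / (1 - rsum k z))
      by (unfold Rdiv; ring).
    rewrite E2.
    destruct (OK_use _ _ _ H2) as [S0 S1].
    assert (rsum k (fun i => q i ^ 2 / (1 - z i)) <=
       rsum k (fun i => q i ^ 2 / z i) + 2 * (rsum k q) ^ 2 / (1 - rsum k z)).
    { apply HQ.
      - intros i Hi. destruct (OK_use _ _ _ (proj1 (H1 i Hi))). auto.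
      - intros i Hi. destruct (OK_use _ _ _ (proj1 (H1 i Hi))). auto.
      - intros i Hi E. destruct (OK_use _ _ _ (proj2 (H1 i Hi))) as [_ F].
        assert (- q i = 0) by (apply F; unfold z in E; lra). lra.
      - lra.
      - intros E. assert (- rsum k q = 0) by (apply S1; lra). lra. }
    lra.
Qed.

Lemma part2 k (x : nat -> R) (i : nat) :
  in_simplex_interior k x -> (i < k)%nat ->
  derivable_pt_lim (fun s => g k (upd x i s)) (x i)
    (ln ((1 - rsum k x) ^ 2 / (x i * (1 - x i)))).
Proof.
  intros [Hx0 Hx1] Hi.
  set (e := fun j => if Nat.eqb j i then 1 else 0).
  set (p := fun j => x j - e j * x i).
  assert (Hup : forall s j, upd x i s j = p j + e j * s).
  { intros s j. unfold upd, p, e. destruct (Nat.eqb j i) eqn:E.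
    - apply Nat.eqb_eq in E. subst. ring.
    - ring. }
  assert (Hpx : forall j, p j + e j * x i = x j) by (intros; unfold p; ring).
  assert (Hxle : forall j, (j < k)%nat -> x j < 1).
  { intros j Hj. assert (x j <= rsum k x) by (apply rsum_term; auto; intros; left; auto). lra. }
  assert (He : rsum k e = 1) by (apply rsum_ind; auto).
  assert (Hp : rsum k p = rsum k x - x i).
  { unfold p. rewrite (rsum_ext _ _ (fun j => x j + - (if Nat.eqb j i then x i else 0))).
    - rewrite rsum_plus, rsum_opp, rsum_ind by auto. ring.
    - intros j _. unfold e. destruct (Nat.eqb j i); ring. }
  assert (HOK : AllOK k p e (x i)).
  { split.
    - intros j Hj. split; left.
      + rewrite Hpx. auto.
      + replace (1 - p j + - e j * x i) with (1 - x j) by (rewrite <- (Hpx j); ring).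
        specialize (Hxle j Hj). lra.
    - left. rewrite He, Hp. lra. }
  apply is_derive_Reals.
  apply (is_derive_ext (Phi k p e)).
  { intros s. unfold Phi. apply g_ext. intros j _. rewrite Hup. reflexivity. }
  replace (ln ((1 - rsum k x) ^ 2 / (x i * (1 - x i)))) with (Phi1 k p e (x i)).
  { apply D_Phi; auto. }
  unfold Phi1.
  rewrite (rsum_ext k (fun j => e j * (ln (p j + e j * x i) + 1))
              (fun j => if Nat.eqb j i then ln (x i) + 1 else 0)).
  2:{ intros j _. rewrite Hpx. unfold e. destruct (Nat.eqb_spec j i); [subst; ring|ring]. }
  rewrite (rsum_ext k (fun j => - e j * (ln (1 - p j + - e j * x i) + 1))
              (fun j => if Nat.eqb j i then - (ln (1 - x i) + 1) else 0)).
  2:{ intros j _. replace (1 - p j + - e j * x i) with (1 - x j) by (rewrite <- (Hpx j); ring).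
      unfold e. destruct (Nat.eqb_spec j i); [subst; ring|ring]. }
  rewrite !rsum_ind, He, Hp by auto.
  replace (1 - (rsum k x - x i) + - (1) * x i) with (1 - rsum k x) by ring.
  assert (0 < x i) by auto. assert (x i < 1) by auto.
  rewrite ln_div, ln_mult, ln_pow by (try apply pow_lt; try apply Rmult_lt_0_compat; lra).
  simpl INR. ring.
Qed.

Theorem mainTheorem8 (k : nat) (hk : (1 <= k)%nat) :
  (forall (x y : nat -> R) (t : R),
      in_simplex k x -> in_simplex k y -> 0 <= t <= 1 ->
      t * g k x + (1 - t) * g k y
        <= g k (fun j => t * x j + (1 - t) * y j))
  /\
  (forall (x : nat -> R) (i : nat),
      in_simplex_interior k x -> (i < k)%nat ->
      derivable_pt_lim (fun s => g k (upd x i s)) (x i)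
        (ln ((1 - rsum k x) ^ 2 / (x i * (1 - x i))))).
Proof.
  split; [apply part1|apply part2].
Qed.
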